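(* Let $\mathbb{F}_q$ be a finite field and $\mathcal{M}=\mathbb{F}_q\times\mathbb{F}_q^{*}\times\mathbb{F}_q$. For $(x,y,z)\in\mathcal{M}$ let $C(x,y,z)=\{(x_1,y_1,z_1)\in\mathcal{M}: x_1y-y_1x=z_1-z\}$. Then $\mathcal{M}=\bigsqcup_{m\in\mathbb{F}_q}C(m,1,0)$ is a disjoint union, and each $C(m,1,0)$ has cardinality $q(q-1)$.
   Context: $C(x,y,z)$ is the centralizer of $(x,y,z)$ for the commuting relation on $\mathcal{M}$ given by: $(x_1,y_1,z_1)$ and $(x_2,y_2,z_2)$ commute iff $x_1y_2-y_1x_2=z_1-z_2$. *)

(* Defs.v *)
From mathcomp Require Import all_boot all_algebra all_field.
Set Implicit Arguments. Unset Strict Implicit. Unset Printing Implicit Defensive.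
Import GRing.Theory.
Local Open Scope ring_scope.

(* M = F_q x F_q^* x F_q, as a subset of F * F * F (triples ((x,y),z)). *)
Definition Mset (F : finFieldType) : {set F * F * F} :=
  [set t : F * F * F | t.1.2 != 0].

Definition Cent (F : finFieldType) (x y z : F) : {set F * F * F} :=
  [set t in Mset F | t.1.1 * y - t.1.2 * x == t.2 - z].

(* Main.v *)
Require Import Defs.
From mathcomp Require Import all_boot all_algebra all_field.
Import GRing.Theory.
Local Open Scope ring_scope.

Theorem lemma6p1 (F : finFieldType) :
  (\bigcup_(m : F) Cent m 1 0 = Mset F) /\
  (forall m m' : F, m != m' -> [disjoint Cent m 1 0 & Cent m' 1 0]) /\
  (forall m : F, #|Cent m 1 0| = (#|F| * (#|F| - 1))%N).
Proof.
split.
  apply/setP => [[[x y] z]]; rewrite /Cent /Mset.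
  apply/bigcupP/idP.
    by case=> m _; rewrite !inE => /andP[].
  rewrite inE /= => hy.
  exists ((x - z) / y) => //.
  rewrite !inE /= hy /= mulr1 subr0 mulrC divfK //.
  by apply/eqP; rewrite opprB addrC subrK.
split.
  move=> m m' hm; rewrite -setI_eq0; apply/eqP/setP => [[[x y] z]].
  rewrite !inE /= !mulr1 !subr0; apply/negbTE/negP => /andP[/andP[hy /eqP h1] /andP[_ /eqP h2]].
  move/negP: hm; apply; apply/eqP.
  apply: (mulfI hy).
  have e1 : y * m = x - z by rewrite -h1 opprB addrC subrK.
  have e2 : y * m' = x - z by rewrite -h2 opprB addrC subrK.
  by rewrite e1 e2.
move=> m.
pose f := fun p : F * F => (p, p.1 - p.2 * m).
have finj : injective f by move=> p q [].
have -> : Cent m 1 0 = f @: setX [set: F] [set y : F | y != 0].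
  apply/setP => [[[x y] z]]; rewrite !inE /= mulr1 subr0.
  apply/andP/imsetP.
    case=> hy /eqP hz; exists (x, y); first by rewrite !inE.
    by rewrite /f hz.
  case=> [[a b]]; rewrite !inE /= => hb [-> -> ->]; split => //.
rewrite card_imset // cardsX cardsT.
congr (_ * _)%N.
rewrite subn1 -(cardsC1 (0 : F)); apply: eq_card => y; rewrite !inE //.
Qed.
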